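(* Let $X$ be a uniformly convex Banach space and $Y$ a finite-dimensional Banach space. Then the pair $(X,Y)$ has the sBPBp.
   Context: All Banach spaces are over $\mathbb{K}=\mathbb{R}$ or $\mathbb{C}$. $S_X$ denotes the unit sphere of $X$ and $\mathcal{L}(X,Y)$ the space of bounded linear operators from $X$ to $Y$ with the operator norm. A pair of Banach spaces $(X,Y)$ has the strong Bishop–Phelps–Bollobás property (sBPBp) if for every $\varepsilon>0$ and every $T\in\mathcal{L}(X,Y)$ with $\|T\|=1$ there exists $\eta=\eta(\varepsilon,T)>0$ such that whenever $x_0\in S_X$ satisfies $\|T(x_0)\|>1-\eta$, there exists $x_1\in S_X$ with $\|T(x_1)\|=1$ and $\|x_1-x_0\|<\varepsilon$. *)

(* Defs.v *)
From Stdlib Require Import Reals List.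
Open Scope R_scope.

(** Scalar field K = R or C (C modelled as R*R). *)
Inductive field_kind := RealF | ComplexF.

Definition scalar (k : field_kind) : Type :=
  match k with RealF => R | ComplexF => (R * R)%type end.

Definition s_zero (k : field_kind) : scalar k :=
  match k return scalar k with RealF => 0 | ComplexF => (0, 0) end.
Definition s_one (k : field_kind) : scalar k :=
  match k return scalar k with RealF => 1 | ComplexF => (1, 0) end.
Definition s_add (k : field_kind) : scalar k -> scalar k -> scalar k :=
  match k return scalar k -> scalar k -> scalar k with
  | RealF => Rplus
  | ComplexF => fun a b => (fst a + fst b, snd a + snd b)
  end.
Definition s_mul (k : field_kind) : scalar k -> scalar k -> scalar k :=
  match k return scalar k -> scalar k -> scalar k with
  | RealF => Rmult
  | ComplexF => fun a b =>
      (fst a * fst b - snd a * snd b, fst a * snd b + snd a * fst b)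
  end.
Definition s_abs (k : field_kind) : scalar k -> R :=
  match k return scalar k -> R with
  | RealF => Rabs
  | ComplexF => fun a => sqrt (fst a * fst a + snd a * snd a)
  end.

Record NormedSpace (k : field_kind) := {
  carrier :> Type;
  vzero : carrier;
  vadd : carrier -> carrier -> carrier;
  vopp : carrier -> carrier;
  vscal : scalar k -> carrier -> carrier;
  vnorm : carrier -> R;
  vadd_assoc : forall x y z, vadd x (vadd y z) = vadd (vadd x y) z;
  vadd_comm : forall x y, vadd x y = vadd y x;
  vadd_0 : forall x, vadd vzero x = x;
  vadd_opp : forall x, vadd x (vopp x) = vzero;
  vscal_1 : forall x, vscal (s_one k) x = x;
  vscal_assoc : forall a b x, vscal a (vscal b x) = vscal (s_mul k a b) x;
  vscal_distr_v : forall a x y, vscal a (vadd x y) = vadd (vscal a x) (vscal a y);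
  vscal_distr_s : forall a b x, vscal (s_add k a b) x = vadd (vscal a x) (vscal b x);
  vnorm_eq0 : forall x, vnorm x = 0 -> x = vzero;
  vnorm_scal : forall a x, vnorm (vscal a x) = s_abs k a * vnorm x;
  vnorm_triangle : forall x y, vnorm (vadd x y) <= vnorm x + vnorm y
}.

Arguments vzero {k} _.
Arguments vadd {k} {_} _ _.
Arguments vopp {k} {_} _.
Arguments vscal {k} {_} _ _.
Arguments vnorm {k} {_} _.

Definition vsub {k} {X : NormedSpace k} (x y : X) : X := vadd x (vopp y).

Definition Banach {k} (X : NormedSpace k) : Prop :=
  forall u : nat -> X,
    (forall eps, 0 < eps -> exists N, forall n m, (N <= n)%nat -> (N <= m)%nat ->
        vnorm (vsub (u n) (u m)) < eps) ->
    exists l : X, forall eps, 0 < eps -> exists N, forall n, (N <= n)%nat ->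
        vnorm (vsub (u n) l) < eps.

Definition uniformly_convex {k} (X : NormedSpace k) : Prop :=
  forall eps, 0 < eps -> exists delta, 0 < delta /\
    forall x y : X, vnorm x = 1 -> vnorm y = 1 -> eps <= vnorm (vsub x y) ->
      vnorm (vadd x y) / 2 <= 1 - delta.

Fixpoint lin_comb {k} {X : NormedSpace k} (cs : list (scalar k * X)) : X :=
  match cs with
  | nil => vzero X
  | (a, v) :: cs' => vadd (vscal a v) (lin_comb cs')
  end.

Definition finite_dim {k} (X : NormedSpace k) : Prop :=
  exists B : list X, forall y : X,
    exists cs : list (scalar k * X),
      (forall p, In p cs -> In (snd p) B) /\ y = lin_comb cs.

Definition is_linear {k} {X Y : NormedSpace k} (T : X -> Y) : Prop :=
  (forall x y, T (vadd x y) = vadd (T x) (T y)) /\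
  (forall a x, T (vscal a x) = vscal a (T x)).

Definition bounded_linear {k} {X Y : NormedSpace k} (T : X -> Y) : Prop :=
  is_linear T /\ exists C, forall x, vnorm (T x) <= C * vnorm x.

Definition op_norm_is {k} {X Y : NormedSpace k} (T : X -> Y) (r : R) : Prop :=
  is_lub (fun t => exists x : X, vnorm x <= 1 /\ t = vnorm (T x)) r.

Definition sBPBp {k} (X Y : NormedSpace k) : Prop :=
  forall eps, 0 < eps ->
  forall T : X -> Y, bounded_linear T -> op_norm_is T 1 ->
    exists eta, 0 < eta /\
      forall x0 : X, vnorm x0 = 1 -> 1 - eta < vnorm (T x0) ->
        exists x1 : X, vnorm x1 = 1 /\ vnorm (T x1) = 1 /\ vnorm (vsub x1 x0) < eps.

(* Main.v *)
Require Import Defs.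
From Stdlib Require Import Reals Lra Lia Classical ClassicalEpsilon List.
Open Scope R_scope.

Definition s_neg (k : field_kind) : scalar k -> scalar k :=
  match k return scalar k -> scalar k with
  | RealF => Ropp
  | ComplexF => fun a => (- fst a, - snd a)
  end.
Definition s_ofR (k : field_kind) : R -> scalar k :=
  match k return R -> scalar k with
  | RealF => fun r => r
  | ComplexF => fun r => (r, 0)
  end.
Definition s_inv (k : field_kind) : scalar k -> scalar k :=
  match k return scalar k -> scalar k with
  | RealF => Rinv
  | ComplexF => fun a => let r := fst a * fst a + snd a * snd a in
                (fst a / r, - snd a / r)
  end.

Lemma s_add_zero k : s_add k (s_zero k) (s_zero k) = s_zero k.
Proof. destruct k; simpl; f_equal; lra. Qed.
Lemma s_add_neg k a : s_add k a (s_neg k a) = s_zero k.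
Proof. destruct k; simpl. lra. destruct a; simpl; f_equal; lra. Qed.
Lemma s_abs_zero k : s_abs k (s_zero k) = 0.
Proof. destruct k; simpl. apply Rabs_R0. replace (0*0+0*0) with 0 by lra. apply sqrt_0. Qed.
Lemma s_abs_nonneg k a : 0 <= s_abs k a.
Proof. destruct k; simpl. apply Rabs_pos. apply sqrt_pos. Qed.
Lemma s_abs_negone k : s_abs k (s_neg k (s_one k)) = 1.
Proof. destruct k; simpl. rewrite Rabs_Ropp; apply Rabs_R1.
 replace (- (1) * - (1) + - 0 * - 0) with (1*1) by lra. apply sqrt_square; lra. Qed.
Lemma s_abs_ofR k r : s_abs k (s_ofR k r) = Rabs r.
Proof. destruct k; simpl. auto. replace (r*r+0*0) with (Rsqr r) by (unfold Rsqr; lra). apply sqrt_Rsqr_abs. Qed.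
Lemma s_inv_ok k a : a <> s_zero k ->
  s_mul k (s_inv k a) a = s_one k /\ s_abs k (s_inv k a) * s_abs k a = 1.
Proof.
  destruct k; simpl; intro H.
  - split. field; auto. rewrite <- Rabs_mult. rewrite Rinv_l; auto. apply Rabs_R1.
  - destruct a as [x y]; simpl in *.
    assert (Hr : 0 < x*x+y*y).
    { destruct (Req_dec x 0); destruct (Req_dec y 0); subst.
      - exfalso; apply H; auto.
      - nra. - nra. - nra. }
    split.
    + f_equal; field; lra.
    + rewrite <- sqrt_mult.
      * replace ((x / (x * x + y * y) * (x / (x * x + y * y)) +
         - y / (x * x + y * y) * (- y / (x * x + y * y))) * (x * x + y * y)) with (1*1)
         by (field; lra). apply sqrt_square; lra.
      * nra. * nra.
Qed.

Lemma s_abs_fst (a : R*R) : Rabs (fst a) <= s_abs ComplexF a.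
Proof. destruct a as [x y]; simpl. rewrite <- sqrt_Rsqr_abs. apply sqrt_le_1_alt. unfold Rsqr; nra. Qed.
Lemma s_abs_snd (a : R*R) : Rabs (snd a) <= s_abs ComplexF a.
Proof. destruct a as [x y]; simpl. rewrite <- sqrt_Rsqr_abs. apply sqrt_le_1_alt. unfold Rsqr; nra. Qed.
Lemma s_abs_le_sum x y : s_abs ComplexF (x,y) <= Rabs x + Rabs y.
Proof. simpl. rewrite <- (sqrt_square (Rabs x + Rabs y)).
  2:{ pose proof (Rabs_pos x); pose proof (Rabs_pos y); lra. }
  apply sqrt_le_1_alt. pose proof (Rabs_pos x); pose proof (Rabs_pos y).
  assert (x*x = Rabs x * Rabs x) by (rewrite <- Rabs_mult; rewrite Rabs_right; nra).
  assert (y*y = Rabs y * Rabs y) by (rewrite <- Rabs_mult; rewrite Rabs_right; nra).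
  nra. Qed.

Definition incr (phi : nat -> nat) := forall n, (phi n < phi (S n))%nat.
Lemma incr_ge phi : incr phi -> forall n, (n <= phi n)%nat.
Proof. intros H n; induction n. lia. specialize (H n); lia. Qed.
Lemma incr_comp phi psi : incr phi -> incr psi -> incr (fun n => phi (psi n)).
Proof. intros Hp Hq n. assert (forall a b, (a < b)%nat -> (phi a < phi b)%nat).
  { intros a b Hab. induction Hab. apply Hp. specialize (Hp m); lia. }
  apply H, Hq. Qed.

Lemma extract (P : nat -> nat -> Prop) :
  (forall k N, exists p, (N <= p)%nat /\ P k p) ->
  exists phi, incr phi /\ forall k, P k (phi k).
Proof.
  intro H.
  pose (g := fun k N => proj1_sig (constructive_indefinite_description _ (H k N))).
  assert (Hg : forall k N, (N <= g k N)%nat /\ P k (g k N)).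
  { intros; unfold g; destruct constructive_indefinite_description; auto. }
  exists (fix phi n := match n with O => g O O | S m => g (S m) (S (phi m)) end).
  split.
  - intro n. simpl. destruct (Hg (S n) (S ((fix phi n := match n with O => g O O | S m => g (S m) (S (phi m)) end) n))). lia.
  - intro n; destruct n; simpl; apply Hg.
Qed.

Lemma small_inv eps : 0 < eps -> exists N, forall n, (N <= n)%nat -> / (INR n + 1) < eps.
Proof.
  intro He. destruct (archimed_cor1 eps He) as [N [H1 H2]]. exists N. intros n Hn.
  apply le_INR in Hn. assert (0 < INR N) by (apply lt_0_INR; lia).
  eapply Rle_lt_trans; [|exact H1]. apply Rinv_le_contravar; lra.
Qed.

Lemma real_BW (u : nat -> R) : (exists M, forall n, Rabs (u n) <= M) ->
  exists phi, incr phi /\ exists l, forall eps, 0 < eps -> exists N, forall n, (N <= n)%nat ->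
   Rabs (u (phi n) - l) < eps.
Proof.
  intros [M HM].
  destruct (Bolzano_Weierstrass u (fun c => -M <= c <= M) (compact_P3 _ _)) as [l Hl].
  { intro n; specialize (HM n); unfold Rabs in HM; destruct (Rcase_abs (u n)); lra. }
  destruct (extract (fun k p => Rabs (u p - l) < / (INR k + 1))) as [phi [Hphi Hp]].
  { intros k N. assert (Hpos : 0 < / (INR k + 1)) by (apply Rinv_0_lt_compat; pose proof (pos_INR k); lra).
    destruct (Hl (fun y => Rabs (y - l) < / (INR k + 1)) N) as [p Hp].
    - exists (mkposreal _ Hpos). intros y Hy. exact Hy.
    - exists p; auto. }
  exists phi; split; auto. exists l. intros eps He. destruct (small_inv eps He) as [N HN].
  exists N; intros n Hn. eapply Rlt_trans; [apply Hp|]. auto.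
Qed.

Definition sconv k (a : nat -> scalar k) (l : scalar k) :=
  forall eps, 0 < eps -> exists N, forall n, (N <= n)%nat -> s_abs k (s_add k (a n) (s_neg k l)) < eps.

Lemma sconv_sub k a l phi : sconv k a l -> incr phi -> sconv k (fun n => a (phi n)) l.
Proof. intros H Hp eps He. destruct (H eps He) as [N HN]. exists N; intros n Hn.
  apply HN. pose proof (incr_ge phi Hp n); lia. Qed.

Lemma scalar_BW k (a : nat -> scalar k) : (exists M, forall n, s_abs k (a n) <= M) ->
  exists phi, incr phi /\ exists l, sconv k (fun n => a (phi n)) l.
Proof.
  intros [M HM]. destruct k.
  - apply real_BW. exists M; auto.
  - destruct (real_BW (fun n => fst (a n))) as [p [Hp [l1 H1]]].
    { exists M; intro n; eapply Rle_trans; [apply s_abs_fst|apply HM]. }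
    destruct (real_BW (fun n => snd (a (p n)))) as [q [Hq [l2 H2]]].
    { exists M; intro n; eapply Rle_trans; [apply s_abs_snd|apply HM]. }
    exists (fun n => p (q n)); split. apply incr_comp; auto.
    exists (l1, l2). intros eps He.
    destruct (H1 (eps/2) ltac:(lra)) as [N1 HN1]. destruct (H2 (eps/2) ltac:(lra)) as [N2 HN2].
    exists (max N1 N2). intros n Hn. simpl s_add; simpl s_neg.
    eapply Rle_lt_trans. apply s_abs_le_sum. simpl.
    specialize (HN2 n ltac:(lia)). specialize (HN1 (q n)).
    assert (N1 <= q n)%nat by (pose proof (incr_ge q Hq n); lia).
    specialize (HN1 H). simpl in *. unfold Rminus in *. lra.
Qed.


Lemma vadd_0r {k} {X : NormedSpace k} (x : X) : vadd x (vzero X) = x.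
Proof. rewrite vadd_comm; apply vadd_0. Qed.

Lemma vadd_cancel {k} {X : NormedSpace k} (x y z : X) : vadd x y = vadd x z -> y = z.
Proof. intro H. rewrite <- (vadd_0 _ X y), <- (vadd_0 _ X z).
  rewrite <- (vadd_opp _ X x). rewrite (vadd_comm _ X x).
  rewrite <- !vadd_assoc, H. reflexivity. Qed.

Lemma vscal_zero {k} {X : NormedSpace k} (x : X) : vscal (s_zero k) x = vzero X.
Proof. apply (vadd_cancel (vscal (s_zero k) x)). rewrite <- vscal_distr_s, s_add_zero, vadd_0r. auto. Qed.

Lemma vscal_vzero {k} {X : NormedSpace k} a : vscal a (vzero X) = vzero X.
Proof. apply (vadd_cancel (vscal a (vzero X))). rewrite <- vscal_distr_v, !vadd_0r. auto. Qed.

Lemma opp_unique {k} {X : NormedSpace k} (x y : X) : vadd x y = vzero X -> y = vopp x.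
Proof. intro H. apply (vadd_cancel x). rewrite H, vadd_opp. auto. Qed.

Lemma vopp_opp {k} {X : NormedSpace k} (x : X) : vopp (vopp x) = x.
Proof. symmetry; apply opp_unique. rewrite vadd_comm; apply vadd_opp. Qed.

Lemma vscal_neg {k} {X : NormedSpace k} a (x : X) : vscal (s_neg k a) x = vopp (vscal a x).
Proof. apply opp_unique. rewrite <- vscal_distr_s, s_add_neg. apply vscal_zero. Qed.

Lemma vopp_add {k} {X : NormedSpace k} (x y : X) : vopp (vadd x y) = vadd (vopp x) (vopp y).
Proof. symmetry; apply opp_unique.
  rewrite <- vadd_assoc, (vadd_assoc _ X y), (vadd_comm _ X y (vopp x)), <- vadd_assoc,
     vadd_opp, vadd_0r. apply vadd_opp. Qed.

Lemma vnorm_zero {k} {X : NormedSpace k} : vnorm (vzero X) = 0.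
Proof. rewrite <- (vscal_zero (vzero X)), vnorm_scal, s_abs_zero. ring. Qed.

Lemma vnorm_opp {k} {X : NormedSpace k} (x : X) : vnorm (vopp x) = vnorm x.
Proof. assert (vopp x = vscal (s_neg k (s_one k)) x).
  { rewrite vscal_neg, vscal_1; auto. }
  rewrite H, vnorm_scal, s_abs_negone. ring. Qed.

Lemma vnorm_nonneg {k} {X : NormedSpace k} (x : X) : 0 <= vnorm x.
Proof. pose proof (vnorm_triangle _ X x (vopp x)). rewrite vadd_opp, vnorm_zero, vnorm_opp in H. lra. Qed.

Lemma vsub_opp {k} {X : NormedSpace k} (x y : X) : vsub y x = vopp (vsub x y).
Proof. unfold vsub. rewrite vopp_add, vopp_opp, vadd_comm. auto. Qed.

Lemma vnorm_sub_sym {k} {X : NormedSpace k} (x y : X) : vnorm (vsub x y) = vnorm (vsub y x).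
Proof. rewrite (vsub_opp x y), vnorm_opp; auto. Qed.

Lemma vsub_chain {k} {X : NormedSpace k} (x y z : X) : vsub x z = vadd (vsub x y) (vsub y z).
Proof. unfold vsub. rewrite <- vadd_assoc, (vadd_assoc _ X (vopp y)), (vadd_comm _ X (vopp y) y),
   vadd_opp, vadd_0. auto. Qed.

Lemma vnorm_tri_sub {k} {X : NormedSpace k} (x y z : X) :
  vnorm (vsub x z) <= vnorm (vsub x y) + vnorm (vsub y z).
Proof. rewrite (vsub_chain x y z). apply vnorm_triangle. Qed.

Lemma vnorm_le_sub {k} {X : NormedSpace k} (x y : X) : vnorm x <= vnorm (vsub x y) + vnorm y.
Proof. assert (x = vadd (vsub x y) y).
  { unfold vsub. rewrite <- vadd_assoc, (vadd_comm _ X (vopp y)), vadd_opp, vadd_0r; auto. }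
  rewrite H at 1. apply vnorm_triangle. Qed.

Lemma vsub_eq0 {k} {X : NormedSpace k} (x y : X) : vsub x y = vzero X -> x = y.
Proof. intro H. rewrite <- (vadd_0r x), <- (vadd_opp _ X y), (vadd_comm _ X y), vadd_assoc.
  fold (vsub x y). rewrite H, vadd_0; auto. Qed.

Lemma vnorm_add_ge {k} {X : NormedSpace k} (x y : X) : vnorm y <= vnorm (vadd x y) + vnorm x.
Proof. assert (y = vadd (vopp x) (vadd x y)).
  { rewrite vadd_assoc, (vadd_comm _ X (vopp x)), vadd_opp, vadd_0; auto. }
  rewrite H at 1. rewrite Rplus_comm, <- (vnorm_opp x). apply vnorm_triangle. Qed.

Lemma vnorm_two {k} {X : NormedSpace k} (a b : X) :
  2 * vnorm a <= vnorm (vadd a b) + vnorm (vsub a b).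
Proof. assert (vadd a a = vadd (vadd a b) (vsub a b)).
  { unfold vsub. rewrite <- vadd_assoc, (vadd_assoc _ X b), (vadd_comm _ X b a), <- vadd_assoc,
      vadd_opp, vadd_0r. auto. }
  pose proof (vnorm_triangle _ X (vadd a b) (vsub a b)). rewrite <- H in H0.
  assert (vadd a a = vscal (s_add k (s_one k) (s_one k)) a) by (rewrite vscal_distr_s, vscal_1; auto).
  rewrite H1, vnorm_scal in H0. replace (s_abs k (s_add k (s_one k) (s_one k))) with 2 in H0. lra.
  destruct k; simpl. rewrite Rabs_right; lra.
  replace ((1 + 1) * (1 + 1) + (0 + 0) * (0 + 0)) with (2*2) by ring. rewrite sqrt_square; lra. Qed.

Lemma vsub_add2 {k} {X : NormedSpace k} (p q r s : X) :
  vsub (vadd p q) (vadd r s) = vadd (vsub p r) (vsub q s).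
Proof. unfold vsub. rewrite vopp_add. rewrite <- !vadd_assoc. f_equal.
  rewrite !vadd_assoc. f_equal. apply vadd_comm. Qed.

Lemma vsub_scal {k} {X : NormedSpace k} a c (b : X) :
  vsub (vscal a b) (vscal c b) = vscal (s_add k a (s_neg k c)) b.
Proof. unfold vsub. rewrite vscal_distr_s, vscal_neg. auto. Qed.

Definition conv {k} {X : NormedSpace k} (u : nat -> X) (l : X) :=
  forall eps, 0 < eps -> exists N, forall n, (N <= n)%nat -> vnorm (vsub (u n) l) < eps.

Lemma conv_sub {k} {X : NormedSpace k} (u : nat -> X) l phi : conv u l -> incr phi -> conv (fun n => u (phi n)) l.
Proof. intros H Hp eps He. destruct (H eps He) as [N HN]. exists N; intros n Hn.
  apply HN. pose proof (incr_ge phi Hp n); lia. Qed.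

Lemma conv_unique {k} {X : NormedSpace k} (u : nat -> X) l l' : conv u l -> conv u l' -> l = l'.
Proof. intros H H'. apply vsub_eq0. apply vnorm_eq0.
  apply Rle_antisym; [|apply vnorm_nonneg]. apply Rnot_lt_le; intro Hlt.
  set (e := vnorm (vsub l l')) in *.
  destruct (H (e/2) ltac:(lra)) as [N1 H1]. destruct (H' (e/2) ltac:(lra)) as [N2 H2].
  specialize (H1 (max N1 N2) ltac:(lia)). specialize (H2 (max N1 N2) ltac:(lia)).
  pose proof (vnorm_tri_sub l (u (max N1 N2)) l'). rewrite (vnorm_sub_sym l (u (max N1 N2))) in H0. fold e in H0. lra. Qed.

Definition inspan {k} {X : NormedSpace k} (L : list X) (y : X) :=
  exists cs : list (scalar k * X), (forall p, In p cs -> In (snd p) L) /\ y = lin_comb cs.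

Lemma inspan_nil {k} {X : NormedSpace k} (y : X) : inspan nil y -> y = vzero X.
Proof. intros [cs [H1 H2]]. destruct cs as [|p cs]. auto. exfalso; apply (H1 p); simpl; auto. Qed.

Lemma inspan_zero {k} {X : NormedSpace k} (L : list X) : inspan L (vzero X).
Proof. exists nil; split; simpl; auto. tauto. Qed.

Lemma inspan_add {k} {X : NormedSpace k} (L : list X) x y : inspan L x -> inspan L y -> inspan L (vadd x y).
Proof. intros [c1 [H1 E1]] [c2 [H2 E2]]. exists (c1 ++ c2). split.
  - intros p Hp. apply in_app_or in Hp. destruct Hp; auto.
  - subst. induction c1 as [|[a v] c1 IH]; simpl. rewrite vadd_0; auto.
    rewrite <- IH. symmetry; apply vadd_assoc. intros p Hp; apply H1; simpl; auto. Qed.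

Lemma inspan_scal {k} {X : NormedSpace k} (L : list X) a x : inspan L x -> inspan L (vscal a x).
Proof. intros [c [H E]]. exists (map (fun p => (s_mul k a (fst p), snd p)) c). split.
  - intros p Hp. apply in_map_iff in Hp. destruct Hp as [q [Eq Hq]]. subst; simpl. auto.
  - subst. induction c as [|[b v] c IH]; simpl. apply vscal_vzero.
    rewrite vscal_distr_v, vscal_assoc, IH. auto. intros p Hp; apply H; simpl; auto. Qed.

Lemma inspan_in {k} {X : NormedSpace k} (L : list X) b : In b L -> inspan L b.
Proof. intro H. exists ((s_one k, b) :: nil). split.
  - intros p [Hp|[]]. subst; simpl; auto.
  - simpl. rewrite vscal_1, vadd_0r; auto. Qed.

Lemma inspan_cons_inv {k} {X : NormedSpace k} (L : list X) b y :
  inspan (b :: L) y -> exists a z, inspan L z /\ y = vadd (vscal a b) z.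
Proof. intros [c [H E]]. subst. induction c as [|[a v] c IH]; simpl.
  - exists (s_zero k), (vzero X). split. apply inspan_zero. rewrite vscal_zero, vadd_0; auto.
  - destruct IH as [a' [z [Hz Ez]]]. intros p Hp; apply H; simpl; auto.
    rewrite Ez. destruct (H (a, v) (or_introl eq_refl)) as [Hv|Hv]; simpl in Hv.
    + subst v. exists (s_add k a a'), z. split; auto. rewrite vadd_assoc, vscal_distr_s; auto.
    + exists a', (vadd (vscal a v) z). split. apply inspan_add; auto. apply inspan_scal, inspan_in; auto.
      rewrite !vadd_assoc, (vadd_comm _ X (vscal a v)). auto. Qed.

Lemma inspan_cons {k} {X : NormedSpace k} (L : list X) b a z :
  inspan L z -> inspan (b :: L) (vadd (vscal a b) z).
Proof. intros [c [H E]]. exists ((a, b) :: c). split.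
  - intros p [Hp|Hp]. subst; simpl; auto. simpl; right; auto.
  - subst; simpl; auto. Qed.

Lemma inspan_mono {k} {X : NormedSpace k} (L : list X) b y : inspan L y -> inspan (b :: L) y.
Proof. intros [c [H E]]. exists c; split; auto. intros p Hp; simpl; right; auto. Qed.

Lemma key_bound {k} {Y : NormedSpace k} (L : list Y) b d a z :
  0 < d -> (forall w, inspan L w -> d <= vnorm (vsub b w)) -> inspan L z ->
  s_abs k a * d <= vnorm (vadd (vscal a b) z).
Proof.
  intros Hd HdZ Hz. destruct (classic (a = s_zero k)) as [Ha|Ha].
  - subst. rewrite s_abs_zero. rewrite Rmult_0_l. apply vnorm_nonneg.
  - destruct (s_inv_ok k a Ha) as [Hm Hc]. set (c := s_inv k a) in *.
    assert (E : vscal c (vadd (vscal a b) z) = vsub b (vscal (s_neg k c) z)).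
    { unfold vsub. rewrite vscal_neg, vopp_opp, vscal_distr_v, vscal_assoc, Hm, vscal_1. auto. }
    pose proof (HdZ _ (inspan_scal L (s_neg k c) z Hz)). rewrite <- E, vnorm_scal in H.
    pose proof (s_abs_nonneg k a).
    apply Rmult_le_compat_l with (r := s_abs k a) in H; auto.
    rewrite <- Rmult_assoc, (Rmult_comm (s_abs k a) (s_abs k c)), Hc, Rmult_1_l in H. lra.
Qed.

Lemma span_BW {k} {Y : NormedSpace k} (L : list Y) : forall y : nat -> Y,
  (forall n, inspan L (y n)) -> (exists M, forall n, vnorm (y n) <= M) ->
  exists phi, incr phi /\ exists l, inspan L l /\ conv (fun n => y (phi n)) l.
Proof.
  induction L as [|b L IH]; intros y Hy [M HM].
  - exists (fun n => n). split. intro n; lia. exists (vzero Y). split. apply inspan_zero.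
    intros eps He. exists O. intros n _. rewrite (inspan_nil _ (Hy n)). unfold vsub.
    rewrite vadd_opp, vnorm_zero; auto.
  - destruct (classic (exists d, 0 < d /\ forall z, inspan L z -> d <= vnorm (vsub b z))) as [[d [Hd HdZ]] | HB].
    + assert (Hdec : forall n, {p : scalar k * Y | inspan L (snd p) /\ y n = vadd (vscal (fst p) b) (snd p)}).
      { intro n. apply constructive_indefinite_description.
        destruct (inspan_cons_inv _ _ _ (Hy n)) as [a [z [H1 H2]]]. exists (a, z); auto. }
      set (a := fun n => fst (proj1_sig (Hdec n))). set (z := fun n => snd (proj1_sig (Hdec n))).
      assert (Hz : forall n, inspan L (z n)) by (intro n; unfold z; destruct (Hdec n); simpl; tauto).
      assert (Hyz : forall n, y n = vadd (vscal (a n) b) (z n)) by (intro n; unfold a, z; destruct (Hdec n); simpl; tauto).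
      assert (Ha : forall n, s_abs k (a n) <= M / d).
      { intro n. pose proof (key_bound L b d (a n) (z n) Hd HdZ (Hz n)). rewrite <- Hyz in H.
        specialize (HM n). apply Rmult_le_reg_r with d; auto. unfold Rdiv. rewrite Rmult_assoc, Rinv_l; lra. }
      destruct (scalar_BW k a (ex_intro _ _ Ha)) as [psi [Hpsi [alpha Halpha]]].
      destruct (IH (fun n => z (psi n))) as [chi [Hchi [zeta [Hzeta Hconv]]]].
      { intro n; apply Hz. }
      { exists (M + M / d * vnorm b). intro n. pose proof (vnorm_add_ge (vscal (a (psi n)) b) (z (psi n))).
        rewrite <- Hyz, vnorm_scal in H. pose proof (HM (psi n)). pose proof (Ha (psi n)).
        pose proof (vnorm_nonneg b).
        assert (s_abs k (a (psi n)) * vnorm b <= M / d * vnorm b) by (apply Rmult_le_compat_r; auto). lra. }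
      exists (fun n => psi (chi n)). split. apply incr_comp; auto.
      exists (vadd (vscal alpha b) zeta). split. apply inspan_cons; auto.
      pose proof (sconv_sub k _ _ chi Halpha Hchi) as Ha2. simpl in Ha2.
      intros eps He. pose proof (vnorm_nonneg b).
      assert (Hb1 : 0 < vnorm b + 1) by lra.
      destruct (Ha2 (eps / 2 / (vnorm b + 1))) as [N1 HN1].
      { apply Rdiv_lt_0_compat; lra. }
      destruct (Hconv (eps / 2) ltac:(lra)) as [N2 HN2].
      exists (max N1 N2). intros n Hn. rewrite Hyz, vsub_add2.
      eapply Rle_lt_trans. apply vnorm_triangle. rewrite vsub_scal, vnorm_scal.
      specialize (HN1 n ltac:(lia)). specialize (HN2 n ltac:(lia)).
      set (s := s_abs k (s_add k (a (psi (chi n))) (s_neg k alpha))) in *.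
      assert (s * vnorm b <= s * (vnorm b + 1)).
      { apply Rmult_le_compat_l. apply s_abs_nonneg. lra. }
      assert (s * (vnorm b + 1) < eps / 2).
      { apply Rmult_lt_reg_r with (/ (vnorm b + 1)). apply Rinv_0_lt_compat; lra.
        rewrite Rmult_assoc, Rinv_r; lra. }
      simpl in HN2. lra.
    + assert (HB' : forall d, 0 < d -> exists z, inspan L z /\ vnorm (vsub b z) < d).
      { intros d Hd. apply NNPP; intro Hn. apply HB. exists d; split; auto.
        intros z Hz. apply Rnot_lt_le. intro Hlt. apply Hn. exists z; auto. }
      assert (Hw : forall n, {w | inspan L w /\ vnorm (vsub b w) < / (INR n + 1)}).
      { intro n. apply constructive_indefinite_description. apply HB'.
        apply Rinv_0_lt_compat; pose proof (pos_INR n); lra. }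
      set (w := fun n => proj1_sig (Hw n)).
      assert (Hw1 : forall n, inspan L (w n)) by (intro n; unfold w; destruct (Hw n); simpl; tauto).
      assert (Hw2 : forall n, vnorm (vsub b (w n)) < / (INR n + 1)) by (intro n; unfold w; destruct (Hw n); simpl; tauto).
      destruct (IH w Hw1) as [chi [Hchi [l [Hl Hconv]]]].
      { exists (vnorm b + 1). intro n. pose proof (vnorm_le_sub (w n) b). rewrite vnorm_sub_sym in H.
        pose proof (Hw2 n). assert (/ (INR n + 1) <= 1).
        { rewrite <- Rinv_1. apply Rinv_le_contravar. lra. pose proof (pos_INR n); lra. }
        lra. }
      assert (Hconvb : conv (fun n => w (chi n)) b).
      { intros eps He. destruct (small_inv eps He) as [N HN]. exists N. intros n Hn.
        rewrite vnorm_sub_sym. eapply Rlt_trans. apply Hw2. apply HN.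
        pose proof (incr_ge chi Hchi n); lia. }
      pose proof (conv_unique _ _ _ Hconv Hconvb). subst l.
      destruct (IH y) as [phi [Hphi [l [Hl' Hc]]]].
      { intro n. destruct (inspan_cons_inv _ _ _ (Hy n)) as [a [z [H1 H2]]]. rewrite H2.
        apply inspan_add; auto. apply inspan_scal; auto. }
      { exists M; auto. }
      exists phi; split; auto. exists l; split; auto. apply inspan_mono; auto.
Qed.

Theorem mainTheorem4 (k : field_kind) (X Y : NormedSpace k) :
  Banach X -> Banach Y -> uniformly_convex X -> finite_dim Y -> sBPBp X Y.
Proof.
  intros HBX HBY HUC [B HB] eps Heps T [[Tadd Tscal] [C HC]] Hop.
  assert (T0 : T (vzero X) = vzero Y).
  { apply (vadd_cancel (T (vzero X))). rewrite <- Tadd, vadd_0, vadd_0r. auto. }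
  assert (Tsub : forall x y, T (vsub x y) = vsub (T x) (T y)).
  { intros x y. unfold vsub. rewrite Tadd. f_equal. apply opp_unique.
    rewrite <- Tadd, vadd_opp. auto. }
  assert (Tle : forall v, vnorm (T v) <= vnorm v).
  { intro v. destruct (classic (vnorm v = 0)) as [H0|H0].
    - apply vnorm_eq0 in H0. subst. rewrite T0, !vnorm_zero. lra.
    - pose proof (vnorm_nonneg v). assert (Hr : 0 < vnorm v) by lra.
      set (c := s_ofR k (/ vnorm v)).
      assert (Hc : s_abs k c = / vnorm v).
      { unfold c. rewrite s_abs_ofR. apply Rabs_right. left; apply Rinv_0_lt_compat; auto. }
      assert (H1 : vnorm (T (vscal c v)) <= 1).
      { apply (proj1 Hop). exists (vscal c v). split; auto. rewrite vnorm_scal, Hc, Rinv_l; lra. }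
      rewrite Tscal, vnorm_scal, Hc in H1.
      apply Rmult_le_compat_l with (r := vnorm v) in H1; [|lra].
      rewrite <- Rmult_assoc, Rinv_r in H1; lra. }
  destruct (classic (exists eta, 0 < eta /\
      forall x0 : X, vnorm x0 = 1 -> 1 - eta < vnorm (T x0) ->
        exists x1 : X, vnorm x1 = 1 /\ vnorm (T x1) = 1 /\ vnorm (vsub x1 x0) < eps)) as [Hyes|Hno];
    [exact Hyes|exfalso].
  assert (Hseq : forall n : nat, exists x0, vnorm x0 = 1 /\ 1 - / (INR n + 1) < vnorm (T x0) /\
      forall x1, vnorm x1 = 1 -> vnorm (T x1) = 1 -> eps <= vnorm (vsub x1 x0)).
  { intro n. apply NNPP; intro Hn. apply Hno. exists (/ (INR n + 1)). split.
    apply Rinv_0_lt_compat; pose proof (pos_INR n); lra.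
    intros x0 H1 H2. apply NNPP; intro Hx1. apply Hn. exists x0. repeat split; auto.
    intros x1 Ha Hb. apply Rnot_lt_le. intro. apply Hx1. exists x1; auto. }
  set (x := fun n => proj1_sig (constructive_indefinite_description _ (Hseq n))).
  assert (Hx : forall n, vnorm (x n) = 1 /\ 1 - / (INR n + 1) < vnorm (T (x n)) /\
      forall x1, vnorm x1 = 1 -> vnorm (T x1) = 1 -> eps <= vnorm (vsub x1 (x n))).
  { intro n. unfold x. destruct constructive_indefinite_description; simpl; auto. }
  destruct (span_BW B (fun n => T (x n))) as [phi [Hphi [l [_ Hl]]]].
  { intro n. apply HB. }
  { exists 1. intro n. eapply Rle_trans. apply Tle. rewrite (proj1 (Hx n)); lra. }
  set (w := fun n => x (phi n)). simpl in Hl. fold w in Hl.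
  assert (Hw1 : forall n, vnorm (w n) = 1) by (intro n; apply Hx).
  assert (Hlow : forall d, 0 < d -> exists N, forall n, (N <= n)%nat -> 1 - d < vnorm (T (w n))).
  { intros d Hd. destruct (small_inv d Hd) as [N HN]. exists N. intros n Hn.
    destruct (Hx (phi n)) as [_ [H _]]. fold (w n) in H.
    assert (/ (INR (phi n) + 1) < d) by (apply HN; pose proof (incr_ge phi Hphi n); lia). lra. }
  assert (Hcau : forall d, 0 < d -> exists N, forall n m, (N <= n)%nat -> (N <= m)%nat ->
        vnorm (vsub (w n) (w m)) < d).
  { intros d Hd. destruct (HUC d Hd) as [d' [Hd' HU]].
    destruct (Hlow (d'/4) ltac:(lra)) as [N1 HN1]. destruct (Hl (d'/4) ltac:(lra)) as [N2 HN2].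
    exists (max N1 N2). intros n m Hn Hm. apply Rnot_le_lt. intro Hge.
    pose proof (HU (w n) (w m) (Hw1 n) (Hw1 m) Hge).
    pose proof (Tle (vadd (w n) (w m))). rewrite Tadd in H0.
    pose proof (vnorm_two (T (w n)) (T (w m))).
    pose proof (vnorm_tri_sub (T (w n)) l (T (w m))).
    rewrite (vnorm_sub_sym l (T (w m))) in H2.
    pose proof (HN1 n ltac:(lia)). pose proof (HN2 n ltac:(lia)). pose proof (HN2 m ltac:(lia)).
    change (x (phi n)) with (w n) in H4; change (x (phi m)) with (w m) in H5. lra. }
  destruct (HBX w Hcau) as [xl Hxl].
  assert (Hn1 : vnorm xl = 1).
  { apply Rle_antisym; apply le_epsilon; intros e He; destruct (Hxl e He) as [N HN];
      specialize (HN N (le_n N)); pose proof (vnorm_le_sub (w N) xl);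
      pose proof (vnorm_le_sub xl (w N)); rewrite vnorm_sub_sym in H0; rewrite Hw1 in *; lra. }
  assert (HT1 : vnorm (T xl) = 1).
  { apply Rle_antisym. rewrite <- Hn1; apply Tle.
    apply le_epsilon; intros e He.
    destruct (Hxl (e/2) ltac:(lra)) as [N1 HN1]. destruct (Hlow (e/2) ltac:(lra)) as [N2 HN2].
    specialize (HN1 (max N1 N2) ltac:(lia)). specialize (HN2 (max N1 N2) ltac:(lia)).
    pose proof (vnorm_le_sub (T (w (max N1 N2))) (T xl)). rewrite <- Tsub in H.
    pose proof (Tle (vsub (w (max N1 N2)) xl)). lra. }
  destruct (Hxl eps Heps) as [N HN]. specialize (HN N (le_n N)).
  destruct (Hx (phi N)) as [_ [_ H]]. specialize (H xl Hn1 HT1). fold (w N) in H.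
  rewrite vnorm_sub_sym in H. lra.
Qed.
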